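(* Let $n\ge 3$ and let $V$ be an optimal acyclic matching on $\Delta^n$. Let $\rho(V)$ be the set of pairs $(\sigma,\tau)\in V$ with $\dim\tau\le n-2$ (i.e. the pairs of $V$ lying in the $(n-2)$-skeleton $\Delta^n_{(n-2)}$). Then $\rho(V)$ is an optimal acyclic matching on $\Delta^n_{(n-2)}$ with exactly one critical vertex and exactly $n$ critical $(n-2)$-dimensional simplices (and no other critical simplices).
   Context: All simplicial complexes are finite abstract simplicial complexes; simplices are nonempty. $\Delta^n$ is the simplicial complex of all nonempty subsets of an $(n+1)$-element vertex set; $\Delta^n_{(k)}$ denotes its $k$-skeleton. The Hasse diagram $\mathcal{H}(K)$ of $K$ is the directed graph whose vertices are the simplices of $K$, with an edge $\sigma\to\tau$ whenever $\sigma\subsetneq\tau$ and $\dim\tau=\dim\sigma+1$. A matching on $\mathcal{H}(K)$ is a set $W$ of edges of $\mathcal{H}(K)$, no two sharing a vertex; an edge $\sigma\to\tau$ in $W$ is called a pair $(\sigma,\tau)$, and a simplex lying in no pair is called critical. $W$ is acyclic if the directed graph obtained from $\mathcal{H}(K)$ by reversing every edge in $W$ has no directed cycle. An acyclic matching is optimal if it minimizes the total number of critical simplices among all acyclic matchings on $K$. *)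

(* Defs.v *)
From mathcomp Require Import all_boot.
Set Implicit Arguments. Unset Strict Implicit. Unset Printing Implicit Defensive.

(* Simplices are nonempty finite subsets of a finite vertex type T;
   a simplicial complex is a set K : {set {set T}} of simplices.
   dim s = #|s| - 1. *)

Section Morse.
Variable T : finType.
Implicit Types (K : {set {set T}}) (W : {set {set T} * {set T}}).

Definition hasse_edge K (s t : {set T}) : bool :=
  [&& s \in K, t \in K, s \proper t & #|t| == #|s|.+1].

Definition is_matching K W : Prop :=
  (forall p, p \in W -> hasse_edge K p.1 p.2) /\
  (forall p q, p \in W -> q \in W -> p != q ->
     [/\ p.1 != q.1, p.1 != q.2, p.2 != q.1 & p.2 != q.2]).

Definition modified_rel K W : rel {set T} :=
  fun x y => (hasse_edge K x y && ((x, y) \notin W)) ||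
             (hasse_edge K y x && ((y, x) \in W)).

Definition is_acyclic K W : Prop :=
  forall x y, modified_rel K W x y -> ~~ connect (modified_rel K W) y x.

Definition is_acyclic_matching K W : Prop := is_matching K W /\ is_acyclic K W.

Definition critical K W : {set {set T}} :=
  [set s in K | [forall p in W, (p.1 != s) && (p.2 != s)]].

Definition is_optimal K W : Prop :=
  is_acyclic_matching K W /\
  forall W', is_acyclic_matching K W' -> #|critical K W| <= #|critical K W'|.

End Morse.

Definition simplex_complex (n : nat) : {set {set 'I_n.+1}} :=
  [set s : {set 'I_n.+1} | s != set0].

Definition simplex_skeleton (n k : nat) : {set {set 'I_n.+1}} :=
  [set s : {set 'I_n.+1} | (s != set0) && (#|s| <= k.+1)].

Definition restrict_pairs (n k : nat) (V : {set {set 'I_n.+1} * {set 'I_n.+1}}) :=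
  [set p in V | #|p.2| <= k.+1].
Arguments restrict_pairs n k V : clear implicits.

(* Main.v *)
Require Import Defs.
From mathcomp Require Import all_boot.
From mathcomp Require Import zify.
Set Implicit Arguments. Unset Strict Implicit. Unset Printing Implicit Defensive.

Section Gen.
Variable T : finType.
Implicit Types (K : {set {set T}}) (W : {set {set T} * {set T}}).

Lemma critP K W s : reflect (s \in K /\ forall p, p \in W -> p.1 != s /\ p.2 != s)
  (s \in critical K W).
Proof.
rewrite inE; apply: (iffP andP) => [[sK /forall_inP H]|[sK H]]; split => //.
  by move=> p /H /andP.
by apply/forall_inP => p /H [-> ->].
Qed.

Lemma notcrit K W s : s \in K -> s \notin critical K W ->
  exists2 p, p \in W & (p.1 == s) || (p.2 == s).
Proof.
move=> sK; rewrite inE sK /= => /forall_inPn [p pW].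
by rewrite negb_and !negbK => H; exists p.
Qed.

Lemma match_uniq K W p q : is_matching K W -> p \in W -> q \in W ->
  [|| p.1 == q.1, p.1 == q.2, p.2 == q.1 | p.2 == q.2] -> p = q.
Proof.
move=> [_ M] pW qW H; apply/eqP; apply: contraTT H => pq.
by have [/negbTE-> /negbTE-> /negbTE-> /negbTE->] := M p q pW qW pq.
Qed.

Lemma hasse_card K s t : hasse_edge K s t -> #|t| = #|s|.+1.
Proof. by case/and4P => _ _ _ /eqP. Qed.

Lemma hasse_neq K s t : hasse_edge K s t -> s != t.
Proof. by case/and4P => _ _ /properP [] _ [x xt xs] _; apply/eqP => E; rewrite E xt in xs. Qed.

Definition ev_of (p : {set T} * {set T}) := if odd #|p.1| then p.2 else p.1.
Definition od_of (p : {set T} * {set T}) := if odd #|p.1| then p.1 else p.2.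

Lemma count_par K W (P : bool) : is_matching K W ->
  #|[set s in K | odd #|s| == P]| =
  #|[set s in critical K W | odd #|s| == P]| + #|W|.
Proof.
move=> M; have HM := M; case: M => He _.
set f := fun p : {set T} * {set T} => if odd #|p.1| == P then p.1 else p.2.
have fP p : p \in W -> odd #|f p| == P.
  move/He/hasse_card => c; rewrite /f /=; case: ifP => // /negbT h.
  by rewrite c /=; move: h; case: (odd _); clear f; case: P.
have fW p : p \in W -> (f p == p.1) || (f p == p.2).
  by rewrite /f /=; case: (odd _ == P); rewrite eqxx ?orbT.
rewrite -(cardsID (critical K W)); congr (_ + _).
  apply: eq_card => s; rewrite !inE.
  by case: (s \in K); case: [forall _ in _, _]; case: (odd _ == P).
rewrite -(card_in_imset (f := f)); last first.
  move=> p q pW qW E; apply: (match_uniq HM pW qW).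
  case/orP: (fW p pW) => /eqP <-; case/orP: (fW q qW) => /eqP <-;
    by rewrite E eqxx ?orbT.
apply: eq_card => s; rewrite in_setD [X in _ && X]inE; apply/idP/idP.
  case/andP => ncr /andP [sK sP].
  have [p pW ps] := notcrit sK ncr.
  apply/imsetP; exists p => //.
  have c := hasse_card (He p pW).
  rewrite /f /=; case: ifP => h; case/orP: ps => /eqP E //; subst s.
    by move: sP h; rewrite c /=; case: (odd _); clear f fP fW; case: P.
  by rewrite sP in h.
case/imsetP => p pW ->; rewrite fP // andbT. idtac.
have [pK1 pK2] : p.1 \in K /\ p.2 \in K by case/and4P: (He p pW).
apply/andP; split; last by case/orP: (fW p pW) => /eqP ->.
apply/negP => /critP [_ H]; have [h1 h2] := H p pW.
by case/orP: (fW p pW) => /eqP E; rewrite -E eqxx ?andbF in h1 h2.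
Qed.


Lemma connect_mono (e : rel {set T}) (g : {set T} -> nat) :
  (forall a b, e a b -> g a < g b) -> forall a b, connect e a b -> g a <= g b.
Proof.
move=> H a b /connectP [p]; elim: p a => [|c p IH] a /=; first by move=> _ ->.
by case/andP=> eac pc E; apply: leq_trans (ltnW (H _ _ eac)) (IH _ pc E).
Qed.

Lemma crit_vertex K W : set0 \notin K -> (forall v, [set v] \in K) ->
  is_acyclic_matching K W -> forall v0 : T, exists v, [set v] \in critical K W.
Proof.
move=> K0 K1 [M A] v0.
case: (boolP [exists v, [set v] \in critical K W]) => [/existsP //|].
move/existsPn => NC.
have HM := M; case: M => He _.
pose pf v := odflt (set0, set0) [pick p in W | p.1 == [set v]].
have pfP v : pf v \in W /\ (pf v).1 = [set v].
  have [p pW ps] := notcrit (K1 v) (NC v).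
  case/orP: ps => /eqP E.
    rewrite /pf; case: pickP => [q /andP [qW /eqP q1]|/(_ p)]; first by [].
    by rewrite pW E eqxx.
  have := hasse_card (He p pW); rewrite E cards1 => /eqP.
  have := He p pW => /and4P [p1K _ _ _].
  rewrite eqSS => /eqP/esym/cards0_eq p10; by move: p1K; rewrite p10 (negbTE K0).
pose g v := odflt v [pick w in (pf v).2 :\ v].
have gP v : [/\ g v != v, g v \in (pf v).2 & #|(pf v).2| = 2].
  have [pW p1] := pfP v.
  have c := hasse_card (He _ pW); rewrite p1 cards1 in c.
  have := He _ pW => /and4P [_ _ /properP [sub _] _].
  have vin : v \in (pf v).2 by apply: (subsetP sub); rewrite p1 set11.
  have : #|(pf v).2 :\ v| = 1 by move: c; rewrite (cardsD1 v) vin add1n => [[]].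
  move/eqP/cards1P => [w Ew].
  rewrite /g; case: pickP => [u|/(_ w)]; last by rewrite Ew set11.
  by rewrite in_setD1 => /andP [-> ->].
have step1 v : modified_rel K W (pf v).2 [set v].
  have [pW p1] := pfP v; apply/orP; right.
  by rewrite -p1 -surjective_pairing pW andbT; apply: He.
have step2 v : modified_rel K W [set g v] (pf v).2.
  have [pW p1] := pfP v; have [gv gin c2] := gP v.
  apply/orP; left; apply/andP; split.
    have := He _ pW => /and4P [_ p2K _ _].
    rewrite /hasse_edge K1 p2K cards1 c2 eqxx andbT /= properEcard cards1 c2.
    by rewrite sub1set gin.
  apply/negP => qW.
  have := match_uniq HM qW pW; rewrite /= eqxx !orbT => /(_ isT) E.
  by move: gv; have := congr1 fst E; rewrite p1 /= => /set1_inj ->; rewrite eqxx.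
have step v : connect (modified_rel K W) [set g v] [set v].
  apply: connect_trans (connect1 (step2 v)) (connect1 (step1 v)).
have stepk k v : connect (modified_rel K W) [set iter k g v] [set v].
  elim: k => [|k IH] //=; apply: connect_trans (step _) _.
  by rewrite -/(iter k g v) IH.
have := looping_order g v0 => /trajectP [i lt_i E].
set u := iter i g v0.
have Hd : iter (order g v0 - i) g u = u.
  by rewrite /u -iterD subnK ?E // ltnW.
exfalso; move: (A _ _ (step2 u)) => /negP; apply; apply: connect_trans (connect1 (step1 u)) _.
move: Hd; case: (order g v0 - i) (subn_gt0 i (order g v0)) => [|d].
  by rewrite lt_i.
by move=> _; rewrite iterSr => Hd; rewrite -{1}Hd stepk.
Qed.

End Gen.

Section Cone.
Variable n : nat.
Notation T := 'I_n.+1.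
Definition cone : {set {set T} * {set T}} :=
  [set (s, ord0 |: s) | s in [set s : {set T} | (s != set0) && (ord0 \notin s)]].

Lemma coneP p : reflect (exists2 s : {set T}, (s != set0) && (ord0 \notin s) & p = (s, ord0 |: s))
  (p \in cone).
Proof.
apply: (iffP imsetP) => [[s]|[s]] sP E; exists s => //; move: sP; by rewrite inE.
Qed.

Lemma cone_matching : is_acyclic_matching (simplex_complex n) cone.
Proof.
split.
  split.
    move=> p /coneP [s /andP [s0 s0n] ->] /=.
    apply/and4P; split.
    - by rewrite inE.
    - by rewrite inE; apply/set0Pn; exists ord0; rewrite setU11.
    - by rewrite properEcard subsetUr cardsU1 s0n add1n ltnSn.
    - by rewrite cardsU1 s0n add1n.
  move=> p q /coneP [s /andP [s0 s0n] ->] /coneP [t /andP [t0 t0n] ->] /= pq.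
  have st : s != t by apply: contraNneq pq => ->.
  split => //.
  - by apply: contraNneq s0n => ->; rewrite setU11.
  - by apply: contraNneq t0n => <-; rewrite setU11.
  - apply: contraNneq st => /setP E; apply/eqP/setP => x.
    have := E x; rewrite !inE; case: eqP => [->|] //=.
    by rewrite (negbTE s0n) (negbTE t0n).
pose g (s : {set T}) := #|s| + (ord0 \notin s).*2.
have gP x y : modified_rel (simplex_complex n) cone x y -> g x < g y.
  case/orP => /andP [/and4P [xK yK /properP [sub _] /eqP c] nW].
    rewrite /g c; suff -> : (ord0 \notin y) = (ord0 \notin x) by [].
    case: (boolP (ord0 \in x)) => [/(subsetP sub) -> //|x0].
    apply/negP => y0; move/negP: nW; apply; apply/coneP; exists x.
      by move: xK; rewrite inE => ->.
    congr (_, _); apply/eqP; rewrite eq_sym eqEcard c cardsU1 x0.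
    by rewrite subUset sub1set y0 sub add1n leqnn.
  case/coneP: nW => s /andP [_ s0n] [-> ->].
  rewrite /g cardsU1 setU11 s0n /=; lia.
move=> x y /gP lt; apply/negP => /(connect_mono gP); rewrite leqNgt lt.
by [].
Qed.

Lemma cone_crit : #|critical (simplex_complex n) cone| <= 1.
Proof.
rewrite -(cards1 [set ord0 : T]); apply: subset_leq_card.
apply/subsetP => s /critP [sK H]; rewrite inE.
have s0' : s != set0 by move: sK; rewrite inE.
case: (boolP (ord0 \in s)) => s0.
  apply/eqP/setP => x; rewrite inE; apply/idP/eqP => [xs|->//].
  apply/eqP; apply: contraT => x0.
  have : (s :\ ord0, ord0 |: (s :\ ord0)) \in cone.
    apply/coneP; exists (s :\ ord0) => //.
    rewrite !inE eqxx /= andbT; apply/set0Pn; exists x; by rewrite !inE x0.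
  by move/H => [] _ /=; rewrite setD1K // eqxx.
have : (s, ord0 |: s) \in cone by apply/coneP; exists s; rewrite ?s0' ?s0.
by move/H => [] /=; rewrite eqxx.
Qed.

End Cone.

Section Sep.
Variable S : finType.
Implicit Types (X : {set S}) (P Q : pred S).
Lemma sep_split X P : #|X| = #|[set x in X | P x]| + #|[set x in X | ~~ P x]|.
Proof.
rewrite -(cardsID [set x | P x] X); congr (_ + _); apply: eq_card => x; rewrite !inE //.
by rewrite andbC.
Qed.
Lemma eq_sep X P Q : {in X, P =1 Q} -> [set x in X | P x] = [set x in X | Q x].
Proof. by move=> H; apply/setP => x; rewrite !inE; case xX: (x \in X) => //=; rewrite H. Qed.
Lemma sep_false X : #|[set x in X | false]| = 0.
Proof. by apply: eq_card0 => x; rewrite !inE andbF. Qed.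
Lemma sep_true X : [set x in X | true] = X.
Proof. by apply/setP => x; rewrite !inE andbT. Qed.
End Sep.

Ltac clia := first [ match goal with H : is_true (leq 3 ?n) |- _ => clear -H; lia end | lia ].

Theorem mainTheorem4 (n : nat) (V : {set {set 'I_n.+1} * {set 'I_n.+1}}) :
  3 <= n ->
  is_optimal (simplex_complex n) V ->
  let K := simplex_skeleton n (n - 2) in
  let W := restrict_pairs n (n - 2) V in
  [/\ is_optimal K W,
      #|[set s in critical K W | #|s| == 1]| = 1,
      #|[set s in critical K W | #|s| == (n - 2).+1]| = n
    & forall s, s \in critical K W -> (#|s| == 1) || (#|s| == (n - 2).+1)].
Proof.
move=> n3 [[VM VA] Vopt] K W.
have HV p : p \in V -> hasse_edge (simplex_complex n) p.1 p.2 := VM.1 p.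
have cV p : p \in V -> #|p.2| = #|p.1|.+1 := fun h => hasse_card (HV p h).
have K0P s : (s \in simplex_complex n) = (s != set0) by rewrite inE.
have KP s : (s \in K) = (s != set0) && (#|s| <= (n-2).+1) by rewrite /K inE.
have WP p : (p \in W) = (p \in V) && (#|p.2| <= (n-2).+1) by rewrite /W inE.
have V1 : #|critical (simplex_complex n) V| <= 1 :=
  leq_trans (Vopt _ (cone_matching n)) (cone_crit n).
have [v vc] : exists v, [set v] \in critical (simplex_complex n) V.
  apply: (crit_vertex _ _ (conj VM VA) ord0); first by rewrite K0P eqxx.
  by move=> x; rewrite K0P; apply/set0Pn; exists x; rewrite set11.
have notc s : s \in simplex_complex n -> s != [set v] ->
    exists2 p, p \in V & (p.1 == s) || (p.2 == s).
  move=> sK sv; apply: notcrit sK _; apply/negP => sc.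
  have : #|[set [set v]; s]| <= 1.
    apply: leq_trans V1; apply: subset_leq_card; apply/subsetP => x.
    by move/set2P => [] ->.
  by rewrite cards2 eq_sym sv.
have uniqV p q : p \in V -> q \in V ->
    [|| p.1 == q.1, p.1 == q.2, p.2 == q.1 | p.2 == q.2] -> p = q := match_uniq VM.
have sub_hasse x y : hasse_edge K x y -> hasse_edge (simplex_complex n) x y.
  case/and4P => xK yK xy c; apply/and4P; split => //; rewrite K0P.
    by move: xK; rewrite KP => /andP [].
  by move: yK; rewrite KP => /andP [].
have WM : is_matching K W.
  split.
    move=> p; rewrite WP => /andP [pV p2].
    have := HV p pV => /and4P [h1 h2 pr c]; rewrite !K0P in h1 h2.
    apply/and4P; split => //; rewrite KP ?h1 ?h2 ?p2 //=.
    by move/eqP: c => c; rewrite c in p2; apply: ltnW.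
  move=> p q; rewrite !WP => /andP [pV _] /andP [qV _]; exact: VM.2 p q pV qV.
have WA : is_acyclic K W.
  have subr : subrel (modified_rel K W) (modified_rel (simplex_complex n) V).
    move=> x y /orP [/andP [h nW]|/andP [h iW]]; apply/orP; [left|right];
      apply/andP; split.
    - exact: sub_hasse.
    - apply: contra nW => xyV; rewrite WP xyV /=.
      by have := h => /and4P [_ yK _ _]; move: yK; rewrite KP => /andP[].
    - exact: sub_hasse.
    - by move: iW; rewrite WP => /andP [].
  move=> x y /[dup] xyW /subr xy; apply: contra _ (VA _ _ xy).
  by apply: connect_sub => a b /subr; apply: connect1.
have C1 : [set v] \in critical K W.
  apply/critP; split.
    rewrite KP cards1 andbT; apply/set0Pn; exists v; by rewrite set11.
  move=> p; rewrite WP => /andP [pV _]; by have /critP [_ ] := vc; apply.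
have C2 s : s \in critical K W -> s != [set v] -> #|s| = (n-2).+1 /\
    exists2 p, p \in V & (p.1 = s) /\ #|p.2| = (n-2).+2.
  move=> /critP [sK sc] sv.
  have sK0 : s \in simplex_complex n by rewrite K0P; move: sK; rewrite KP => /andP[].
  have [p pV ps] := notc s sK0 sv.
  have s_le : #|s| <= (n-2).+1 by move: sK; rewrite KP => /andP[].
  case: (leqP #|p.2| (n-2).+1) => p2.
    have pW : p \in W by rewrite WP pV.
    by have [h1 h2] := sc p pW; move: ps; rewrite (negbTE h1) (negbTE h2).
  case/orP: ps => /eqP E.
    have c := cV p pV; rewrite E in c.
    have es : #|s| = (n-2).+1 by apply/eqP; rewrite eqn_leq s_le -ltnS -c p2.
    by split => //; exists p => //; split => //; rewrite c es.
  by move: p2; rewrite E ltnNge s_le.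
have C3 p : p \in V -> #|p.2| = (n-2).+2 -> p.1 \in critical K W.
  move=> pV c2; have c := cV p pV; apply/critP; split.
    rewrite KP; have := HV p pV => /and4P [h1 _ _ _]; rewrite K0P in h1.
    by rewrite h1 /=; move: c; rewrite c2 => [[<-]].
  move=> q; rewrite WP => /andP [qV q2]; split; apply/negP => /eqP E.
    have := uniqV p q pV qV; rewrite E eqxx /= => /(_ isT) pq.
    by move: q2; rewrite -pq c2 ltnn.
  have := uniqV p q pV qV; rewrite E eqxx /= orbT => /(_ isT) pq.
  by move: q2; rewrite -pq c2 ltnn.
have claim4 s : s \in critical K W -> (#|s| == 1) || (#|s| == (n-2).+1).
  move=> sc; case: (eqVneq s [set v]) => [->|sv]; first by rewrite cards1 eqxx.
  by have [-> _] := C2 s sc sv; rewrite eqxx orbT.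
have claim2 : [set s in critical K W | #|s| == 1] = [set [set v]].
  apply/eqP; rewrite eqEsubset; apply/andP; split; apply/subsetP => s.
    rewrite in_set => /andP [sc s1]; apply/set1P; apply/eqP.
    apply: contraTT s1 => sv; have [-> _] := C2 s sc sv.
    by apply/negP => /eqP; clia.
  by move=> /set1P ->; rewrite in_set C1 cards1 eqxx.
pose Vn := [set p in V | #|p.2| == (n-2).+2].
have claim3 : [set s in critical K W | #|s| == (n-2).+1] = [set p.1 | p in Vn].
  apply/eqP; rewrite eqEsubset; apply/andP; split; apply/subsetP => s.
    case/setIdP => sc /eqP s1.
    have sv : s != [set v] by apply/eqP => E; move: s1; rewrite E cards1; clia.
    have [_ [p pV [E c2]]] := C2 s sc sv.
    by apply/imsetP; exists p; [rewrite in_set pV c2 eqxx | rewrite E].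
  case/imsetP => p; case/setIdP => pV /eqP c2 ->.
  rewrite in_set C3 //=; have := cV p pV; rewrite c2 => [[<-]]; by rewrite eqxx.
have cardVn : #|Vn| = n.
  have TK : [set: 'I_n.+1] \in simplex_complex n.
    by rewrite K0P; apply/set0Pn; exists ord0.
  have Tv : [set: 'I_n.+1] != [set v].
    by apply/eqP => E; have := cardsT 'I_n.+1; rewrite E cards1 card_ord; clia.
  have [p0 p0V p0s] := notc _ TK Tv.
  have c0 := cV p0 p0V.
  have p02 : p0.2 = setT.
    case/orP: p0s => /eqP E //; exfalso.
    have := subset_leq_card (subsetT p0.2); rewrite cardsT card_ord c0 E cardsT card_ord.
    by rewrite ltnn.
  have p01 : #|p0.1| = n by move: c0; rewrite p02 cardsT card_ord => [[]].
  pose Sn := [set s : {set 'I_n.+1} | #|s| == n].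
  have cSn : #|Sn| = n.+1 by rewrite /Sn card_draws card_ord binSn.
  have E : [set p.2 | p in Vn] = Sn :\ p0.1.
    apply/eqP; rewrite eqEsubset; apply/andP; split; apply/subsetP => s.
      case/imsetP => p; case/setIdP => pV /eqP c2 ->.
      rewrite !inE c2; apply/andP; split; last by apply/eqP; clia.
      apply/eqP => E'; have := uniqV p p0 pV p0V; rewrite E' eqxx !orbT => /(_ isT) pp.
      by move: c2; rewrite pp p02 cardsT card_ord; clia.
    rewrite !inE => /andP [sp /eqP sn].
    have sK0 : s \in simplex_complex n by rewrite K0P -card_gt0 sn; clia.
    have sv : s != [set v] by apply/eqP => E'; move: sn; rewrite E' cards1; clia.
    have [p pV ps] := notc s sK0 sv.
    case/orP: ps => /eqP E'.
      have c := cV p pV; rewrite E' sn in c.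
      have p2 : p.2 = setT.
        by apply/eqP; rewrite eqEcard subsetT cardsT card_ord c leqnn.
      have := uniqV p p0 pV p0V; rewrite p2 p02 eqxx !orbT => /(_ isT) pp.
      by move: sp; rewrite -E' pp eqxx.
    apply/imsetP; exists p => //; rewrite in_set pV E' sn; apply/eqP; clia.
  have p0Sn : p0.1 \in Sn by rewrite inE p01.
  rewrite -(card_in_imset (f := snd)); last first.
    move=> p q; rewrite !in_set => /andP [pV _] /andP [qV _] pq.
    by apply: uniqV => //; rewrite pq eqxx !orbT.
  by rewrite E; move: cSn; rewrite (cardsD1 p0.1) p0Sn => [[]].
have card3 : #|[set s in critical K W | #|s| == (n-2).+1]| = n.
  rewrite claim3 card_in_imset // => p q; rewrite !in_set => /andP [pV _] /andP [qV _] pq.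
  by apply: uniqV => //; rewrite pq eqxx.
have card2 : #|[set s in critical K W | #|s| == 1]| = 1 by rewrite claim2 cards1.
have cardW : #|critical K W| = n.+1.
  rewrite (sep_split _ (fun s : {set 'I_n.+1} => #|s| == 1)) card2.
  rewrite (@eq_sep _ _ _ (fun s : {set 'I_n.+1} => #|s| == (n-2).+1)) ?card3 //.
  move=> s /claim4 /orP [] /eqP ->; apply/idP/idP => //; clia.
split => //.
split; first by split.
move=> W' [W'M W'A].
have [v' v'c] : exists v', [set v'] \in critical K W'.
  apply: (crit_vertex _ _ (conj W'M W'A) ord0); first by rewrite KP eqxx.
  by move=> x; rewrite KP cards1 andbT; apply/set0Pn; exists x; rewrite set11.
have O'1 : 0 < #|[set s in critical K W' | odd #|s| == true]|.
  by rewrite card_gt0; apply/set0Pn; exists [set v']; rewrite in_set v'c cards1.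
have e1 := count_par false WM; have e2 := count_par true WM.
have e3 := count_par false W'M; have e4 := count_par true W'M.
have t' := sep_split (critical K W') (fun s : {set 'I_n.+1} => odd #|s| == true).
rewrite (@eq_sep _ _ (fun s : {set 'I_n.+1} => ~~ (odd #|s| == true))
   (fun s => odd #|s| == false)) in t'; last by move=> s _; case: odd.
have {}t' : #|critical K W'| = #|[set s in critical K W' | odd #|s| == true]| +
   #|[set s in critical K W' | odd #|s| == false]| by exact: t'.
have oddn2 : odd (n-2).+1 = ~~ odd n by rewrite /= oddB //; clia.
rewrite cardW.
have n1 : (1 == (n-2).+1) = false by apply/negbTE/eqP; clia.
have n1' : ((n-2).+1 == 1) = false by apply/negbTE/eqP; clia.
case: (boolP (odd n)) => no.
  have Ec : [set s in critical K W | odd #|s| == false] =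
            [set s in critical K W | #|s| == (n-2).+1].
    apply: eq_sep => s /claim4 /orP [] /eqP ->; by rewrite ?oddn2 ?no ?n1 ?n1' ?eqxx.
  have Oc : [set s in critical K W | odd #|s| == true] =
            [set s in critical K W | #|s| == 1].
    apply: eq_sep => s /claim4 /orP [] /eqP ->; by rewrite ?oddn2 ?no ?n1 ?n1' ?eqxx.
  rewrite Ec card3 in e1; rewrite Oc card2 in e2; clia.
have Ec : #|[set s in critical K W | odd #|s| == false]| = 0.
  rewrite (@eq_sep _ _ _ (fun _ => false)) ?sep_false //.
  by move=> s /claim4 /orP [] /eqP ->; rewrite ?oddn2 ?no.
have Oc : #|[set s in critical K W | odd #|s| == true]| = n.+1.
  rewrite (@eq_sep _ _ _ (fun _ => true)) ?sep_true ?cardW //.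
  by move=> s /claim4 /orP [] /eqP ->; rewrite ?oddn2 ?no.
rewrite Ec in e1; rewrite Oc in e2; clia.
Qed.
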